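(* If the open extension of $\equiv_{\mathcal{V}}$ is compatible, then the logics $\mathcal{V}$ and $\mathcal{V}^-$ are equi-expressive. Similarly, if the open extension of $\sqsubseteq_{\mathcal{V}^+}$ is compatible, then the logics $\mathcal{V}^+$ and $\mathcal{V}^{-+}$ are equi-expressive. (Equi-expressive: every value/computation formula of either logic is satisfied by exactly the same closed terms as some formula of the same type and aspect of the other.)
   Context: Language: types $\tau ::= \mathbf{1}\mid\mathbf{N}\mid\tau\to\tau'$; values $*, Z, S(V), \lambda x{:}\tau.M, x$; computations $VW$, $\mathbf{return}\,V$, $\mathbf{let}\,M\Rightarrow x\,\mathbf{in}\,N$, $\mathbf{fix}(V)$, $\mathbf{case}\,V\,\mathbf{of}\,\{Z\Rightarrow M;S(x)\Rightarrow N\}$, and effect operations from a signature $\Sigma$ (arities $\alpha^n\to\alpha$, $\mathbf{N}\times\alpha^n\to\alpha$, $\alpha^{\mathbf{N}}\to\alpha$, $\mathbf{N}\times\alpha^{\mathbf{N}}\to\alpha$), simply typed call-by-value. $\mathit{Val}(\tau)$, $\mathit{Com}(\tau)$: closed values/computations; $\overline{n}=S^n(Z)$. Each $M\in\mathit{Com}(\tau)$ has an operational effect tree $|M|\in T(\mathit{Val}(\tau))$, $TX$ being possibly infinite trees with leaves $\bot$ or in $X$ and nodes labelled by effect operations. A set $\mathcal{O}$ of modalities with $[\![o]\!]\subseteq T\mathbf{1}$ is given; $t[\in P]$ replaces leaves in $P$ by $*$ and other value leaves by $\bot$. Logic $\mathcal{V}$: value formulas $VF(\tau)$, computation formulas $CF(\tau)$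 generated by $\{n\}\in VF(\mathbf{N})$; $(V\mapsto\Phi)\in VF(\tau\to\tau')$ for $V\in\mathit{Val}(\tau)$, $\Phi\in CF(\tau')$; $o\phi\in CF(\tau)$ for $o\in\mathcal{O}$, $\phi\in VF(\tau)$; closure of both under arbitrary $\bigwedge,\bigvee,\neg$. Semantics: $W\models\{n\}$ iff $W=\overline{n}$; $W\models(V\mapsto\Phi)$ iff $WV\models\Phi$; $M\models o\phi$ iff $|M|[\in\{V\mid V\models\phi\}]\in[\![o]\!]$; connectives classical. $\mathcal{V}^+$: the negation-free fragment. Pure logic $\mathcal{V}^-$: as $\mathcal{V}$ but with the rule for $(V\mapsto\Phi)$ replaced by $(\phi\mapsto\Psi)\in VF(\tau\to\tau')$ for $\phi\in VF(\tau)$, $\Psi\in CF(\tau')$, with $W\models(\phi\mapsto\Psi)$ iff for all $V\in\mathit{Val}(\tau)$, $V\models\phi$ implies $WV\models\Psi$; $\mathcal{V}^{-+}$ is its negation-free fragment. For a logic $\mathcal{L}$, $A\sqsubseteq_{\mathcal{L}}B$ iff every formula of $\mathcal{L}$ satisfied by $A$ is satisfied by $B$; $\equiv_{\mathcal{L}}$ is the induced equivalence. Open extension: $\Gamma\vdash M\,R^\circ\,N$ iff $M[\vec V/\vec x]\,R\,N[\vec V/\vec x]$ for all closed value instantiations; compatible: relates each variable to itself and is closed under all term constructors. *)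

(* Defs.v *)
From Stdlib Require Import ClassicalEpsilon.
From mathcomp Require Import all_boot.
Set Implicit Arguments. Unset Strict Implicit. Unset Printing Implicit Defensive.

(* Arities of effect operations:
   AFin n  : alpha^n -> alpha         APFin n : N x alpha^n -> alpha
   AInf    : alpha^N -> alpha         APInf   : N x alpha^N -> alpha *)
Inductive arity := AFin of nat | APFin of nat | AInf | APInf.

Inductive ty := T1 | TN | TArr of ty & ty.

Section Language.
Variable Sig : Type.
Variable ar : Sig -> arity.

(* Raw syntax with de Bruijn indices (variable 0 = innermost binder).
   VLam t m          = lambda x:t. m              (x bound in m)
   CLet m n          = let m => x in n            (x bound in n)
   CFix t v          = fix(v), t = argument type of the resulting function
   CCase v m n       = case v of {Z => m; S(x) => n}   (x bound in n)
   COp s None ms     = s(M_0,...,M_{n-1})         (arity alpha^n)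
   COp s (Some v) ms = s(V; M_0,...,M_{n-1})      (arity N x alpha^n)
   COpN s None f     = s(f),   f : N -> tau       (arity alpha^N)
   COpN s (Some v) f = s(V; f), f : N -> tau      (arity N x alpha^N) *)
Inductive val :=
  | VUnit | VZ | VS (v : val) | VLam (t : ty) (m : comp) | VVar (i : nat)
with comp :=
  | CApp (v w : val) | CRet (v : val) | CLet (m n : comp) | CFix (t : ty) (v : val)
  | CCase (v : val) (m n : comp)
  | COp (s : Sig) (p : option val) (ms : seq comp)
  | COpN (s : Sig) (p : option val) (f : val).

Definition dcomp : comp := CRet VUnit.

(* Simultaneous substitution of (closed) values s_0,...,s_{k-1} for the
   free variables k, k+1, ... (under k binders). Only used with closed values. *)
Fixpoint csv (s : seq val) (k : nat) (v : val) {struct v} : val :=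
  match v with
  | VUnit => VUnit
  | VZ => VZ
  | VS w => VS (csv s k w)
  | VLam t m => VLam t (csc s k.+1 m)
  | VVar i => if i < k then VVar i
              else if i - k < size s then nth VUnit s (i - k)
              else VVar (i - size s)
  end
with csc (s : seq val) (k : nat) (m : comp) {struct m} : comp :=
  match m with
  | CApp v w => CApp (csv s k v) (csv s k w)
  | CRet v => CRet (csv s k v)
  | CLet m n => CLet (csc s k m) (csc s k.+1 n)
  | CFix t v => CFix t (csv s k v)
  | CCase v m n => CCase (csv s k v) (csc s k m) (csc s k.+1 n)
  | COp o p ms => COp o (omap (csv s k) p) (map (csc s k) ms)
  | COpN o p f => COpN o (omap (csv s k) p) (csv s k f)
  end.

(* Simple typing (contexts: head = variable 0). *)
Inductive tyv : seq ty -> val -> ty -> Prop :=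
  | tyUnit G : tyv G VUnit T1
  | tyZ G : tyv G VZ TN
  | tySu G v : tyv G v TN -> tyv G (VS v) TN
  | tyLam G t t' m : tyc (t :: G) m t' -> tyv G (VLam t m) (TArr t t')
  | tyVar G i : i < size G -> tyv G (VVar i) (nth T1 G i)
with tyc : seq ty -> comp -> ty -> Prop :=
  | tyApp G t t' v w : tyv G v (TArr t t') -> tyv G w t -> tyc G (CApp v w) t'
  | tyRet G t v : tyv G v t -> tyc G (CRet v) t
  | tyLet G t t' m n : tyc G m t -> tyc (t :: G) n t' -> tyc G (CLet m n) t'
  | tyFix G t t' v : tyv G v (TArr (TArr t t') (TArr t t')) -> tyc G (CFix t v) (TArr t t')
  | tyCase G t v m n : tyv G v TN -> tyc G m t -> tyc (TN :: G) n t -> tyc G (CCase v m n) t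
  | tyOpFin G t o ms : ar o = AFin (size ms) ->
      (forall i, i < size ms -> tyc G (nth dcomp ms i) t) -> tyc G (COp o None ms) t
  | tyOpPFin G t o v ms : ar o = APFin (size ms) -> tyv G v TN ->
      (forall i, i < size ms -> tyc G (nth dcomp ms i) t) -> tyc G (COp o (Some v) ms) t
  | tyOpInf G t o f : ar o = AInf -> tyv G f (TArr TN t) -> tyc G (COpN o None f) t
  | tyOpPInf G t o v f : ar o = APInf -> tyv G v TN -> tyv G f (TArr TN t) ->
      tyc G (COpN o (Some v) f) t.

Definition numeral (n : nat) : val := iter n VS VZ.
Fixpoint val_nat (v : val) : option nat :=
  match v with VZ => Some 0 | VS w => omap S (val_nat w) | _ => None end.

(* configuration = (stack of continuations "x.N" (x = var 0), computation) *)
Definition config := (seq comp * comp)%type.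

Inductive result :=
  | RStep of config
  | RLeaf of val
  | RNode of Sig & option nat & (nat -> option config)
  | RStuck.

Definition step (c : config) : result :=
  let (S, m) := c in
  match m with
  | CRet v => if S is n :: S' then RStep (S', csc [:: v] 0 n) else RLeaf v
  | CLet m n => RStep (n :: S, m)
  | CApp (VLam _ b) w => RStep (S, csc [:: w] 0 b)
  | CApp _ _ => RStuck
  (* fix(V) --> V (lambda x. let fix(V) => y in y x) *)
  | CFix t v => RStep (S, CApp v (VLam t (CLet (CFix t v) (CApp (VVar 0) (VVar 1)))))
  | CCase v m n =>
      match v with VZ => RStep (S, m) | VS w => RStep (S, csc [:: w] 0 n) | _ => RStuck end
  | COp o p ms =>
      let kids := fun i => if i < size ms then Some (S, nth dcomp ms i) else None in
      match p with
      | None => RNode o None kids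
      | Some v => if val_nat v is Some k then RNode o (Some k) kids else RStuck
      end
  | COpN o p f =>
      let kids := fun i => Some (S, CApp f (numeral i)) in
      match p with
      | None => RNode o None kids
      | Some v => if val_nat v is Some k then RNode o (Some k) kids else RStuck
      end
  end.

(* A possibly infinite tree in T X is represented extensionally by the label it
   carries at each position (a path = list of child indices):
   LLeaf x (a leaf in X), LBot (a bottom leaf; positions below a bottom leaf
   are also LBot), LNode s k (a node labelled by operation s, with parameter
   k = Some n for operations with an N-parameter), LAbsent (position not in
   the tree). *)
Inductive label (X : Type) := LLeaf of X | LBot | LNode of Sig & option nat | LAbsent.
Arguments LBot {X}. Arguments LAbsent {X}.

Definition tree (X : Type) := seq nat -> label X.

Fixpoint run (fuel : nat) (c : config) (p : seq nat) : label val :=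
  match fuel with
  | 0 => LBot
  | f.+1 =>
    match step c with
    | RStep c' => run f c' p
    | RLeaf v => if p is [::] then LLeaf v else LAbsent
    | RNode s k kids =>
        match p with
        | [::] => LNode _ s k
        | i :: p' => if kids i is Some c' then run f c' p' else LAbsent
        end
    | RStuck => LBot
    end
  end.

(* the limit of the approximations (labels stabilise once not LBot) *)
Definition tree_of (c : config) : tree val :=
  fun p => run (epsilon (inhabits 0) (fun n => run n c p <> LBot)) c p.

Definition opsem (M : comp) : tree val := tree_of ([::], M).

(* t[in P] : leaves in P become *, other value leaves become bottom *)
Definition restrict (P : val -> Prop) (t : tree val) : tree unit :=
  fun p =>
    if excluded_middle_informative
         (exists k V, k <= size p /\ t (take k p) = LLeaf V /\ ~ P V)
    then LBot
    else match t p with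
         | LLeaf _ => LLeaf tt
         | LBot => LBot
         | LNode s k => LNode _ s k
         | LAbsent => LAbsent
         end.

Variable O : Type.
Variable osem : O -> tree unit -> Prop.

Unset Implicit Arguments.
(* Logic V; the boolean index says whether negation may occur
   (vform true = V, vform false = negation-free fragment V^+). *)
Inductive vform : bool -> ty -> Type :=
  | FNum b (n : nat) : vform b TN
  | FPt b t t' (V : val) : tyv [::] V t -> cform b t' -> vform b (TArr t t')
  | FVAnd b t (I : Type) : (I -> vform b t) -> vform b t
  | FVOr b t (I : Type) : (I -> vform b t) -> vform b t
  | FVNeg t : vform true t -> vform true t
with cform : bool -> ty -> Type :=
  | FMod b t (o : O) : vform b t -> cform b t
  | FCAnd b t (I : Type) : (I -> cform b t) -> cform b t
  | FCOr b t (I : Type) : (I -> cform b t) -> cform b t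
  | FCNeg t : cform true t -> cform true t.

Fixpoint satv b t (phi : vform b t) (W : val) {struct phi} : Prop :=
  match phi with
  | FNum _ n => W = numeral n
  | FPt _ _ _ V _ Phi => satc _ _ Phi (CApp W V)
  | FVAnd _ _ J f => forall i, satv _ _ (f i) W
  | FVOr _ _ J f => exists i, satv _ _ (f i) W
  | FVNeg _ psi => ~ satv _ _ psi W
  end
with satc b t (Phi : cform b t) (M : comp) {struct Phi} : Prop :=
  match Phi with
  | FMod _ _ o phi => osem o (restrict (fun V => satv _ _ phi V) (opsem M))
  | FCAnd _ _ J f => forall i, satc _ _ (f i) M
  | FCOr _ _ J f => exists i, satc _ _ (f i) M
  | FCNeg _ Psi => ~ satc _ _ Psi M
  end.

(* Pure logic V^- (pvform true) and its negation-free fragment V^{-+} (pvform false). *)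
Inductive pvform : bool -> ty -> Type :=
  | PNum b (n : nat) : pvform b TN
  | PArr b t t' : pvform b t -> pcform b t' -> pvform b (TArr t t')
  | PVAnd b t (I : Type) : (I -> pvform b t) -> pvform b t
  | PVOr b t (I : Type) : (I -> pvform b t) -> pvform b t
  | PVNeg t : pvform true t -> pvform true t
with pcform : bool -> ty -> Type :=
  | PMod b t (o : O) : pvform b t -> pcform b t
  | PCAnd b t (I : Type) : (I -> pcform b t) -> pcform b t
  | PCOr b t (I : Type) : (I -> pcform b t) -> pcform b t
  | PCNeg t : pcform true t -> pcform true t.

Fixpoint psatv b t (phi : pvform b t) (W : val) {struct phi} : Prop :=
  match phi with
  | PNum _ n => W = numeral n
  | PArr _ t _ phi Psi => forall V, tyv [::] V t -> psatv _ _ phi V -> psatc _ _ Psi (CApp W V)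
  | PVAnd _ _ J f => forall i, psatv _ _ (f i) W
  | PVOr _ _ J f => exists i, psatv _ _ (f i) W
  | PVNeg _ psi => ~ psatv _ _ psi W
  end
with psatc b t (Phi : pcform b t) (M : comp) {struct Phi} : Prop :=
  match Phi with
  | PMod _ _ o phi => osem o (restrict (fun V => psatv _ _ phi V) (opsem M))
  | PCAnd _ _ J f => forall i, psatc _ _ (f i) M
  | PCOr _ _ J f => exists i, psatc _ _ (f i) M
  | PCNeg _ Psi => ~ psatc _ _ Psi M
  end.

Arguments satv {b t}. Arguments satc {b t}. Arguments psatv {b t}. Arguments psatc {b t}.
Set Implicit Arguments.
Definition vle (b : bool) (t : ty) (V W : val) : Prop :=
  tyv [::] V t /\ tyv [::] W t /\ forall phi : vform b t, satv phi V -> satv phi W.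
Definition cle (b : bool) (t : ty) (M N : comp) : Prop :=
  tyc [::] M t /\ tyc [::] N t /\ forall Phi : cform b t, satc Phi M -> satc Phi N.
Definition veq b t V W := vle b t V W /\ vle b t W V.
Definition ceq b t M N := cle b t M N /\ cle b t N M.

Definition closed_inst (G : seq ty) (s : seq val) : Prop :=
  size s = size G /\ forall i, i < size G -> tyv [::] (nth VUnit s i) (nth T1 G i).

Definition openv (R : ty -> val -> val -> Prop) (G : seq ty) (t : ty) (V W : val) : Prop :=
  tyv G V t /\ tyv G W t /\ forall s, closed_inst G s -> R t (csv s 0 V) (csv s 0 W).
Definition openc (R : ty -> comp -> comp -> Prop) (G : seq ty) (t : ty) (M N : comp) : Prop :=
  tyc G M t /\ tyc G N t /\ forall s, closed_inst G s -> R t (csc s 0 M) (csc s 0 N).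

Definition compatible (Rv : seq ty -> ty -> val -> val -> Prop)
                      (Rc : seq ty -> ty -> comp -> comp -> Prop) : Prop :=
     (forall G i, i < size G -> Rv G (nth T1 G i) (VVar i) (VVar i)) /\
      (forall G, Rv G T1 VUnit VUnit) /\
      (forall G, Rv G TN VZ VZ) /\
      (forall G v w, Rv G TN v w -> Rv G TN (VS v) (VS w)) /\
      (forall G t t' m n, Rc (t :: G) t' m n -> Rv G (TArr t t') (VLam t m) (VLam t n)) /\
      (forall G t t' v v' w w', Rv G (TArr t t') v v' -> Rv G t w w' ->
          Rc G t' (CApp v w) (CApp v' w')) /\
      (forall G t v w, Rv G t v w -> Rc G t (CRet v) (CRet w)) /\
      (forall G t t' m m' n n', Rc G t m m' -> Rc (t :: G) t' n n' ->
          Rc G t' (CLet m n) (CLet m' n')) /\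
      (forall G t t' v w, Rv G (TArr (TArr t t') (TArr t t')) v w ->
          Rc G (TArr t t') (CFix t v) (CFix t w)) /\
      (forall G t v v' m m' n n', Rv G TN v v' -> Rc G t m m' -> Rc (TN :: G) t n n' ->
          Rc G t (CCase v m n) (CCase v' m' n')) /\
      (forall G t o ms ms', ar o = AFin (size ms) -> size ms' = size ms ->
          (forall i, i < size ms -> Rc G t (nth dcomp ms i) (nth dcomp ms' i)) ->
          Rc G t (COp o None ms) (COp o None ms')) /\
      (forall G t o v v' ms ms', ar o = APFin (size ms) -> size ms' = size ms ->
          Rv G TN v v' ->
          (forall i, i < size ms -> Rc G t (nth dcomp ms i) (nth dcomp ms' i)) ->
          Rc G t (COp o (Some v) ms) (COp o (Some v') ms')) /\
      (forall G t o f f', ar o = AInf -> Rv G (TArr TN t) f f' ->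
          Rc G t (COpN o None f) (COpN o None f')) /\
      (forall G t o v v' f f', ar o = APInf -> Rv G TN v v' -> Rv G (TArr TN t) f f' ->
          Rc G t (COpN o (Some v) f) (COpN o (Some v') f')).

Definition equi_expressive (b b' : bool) : Prop :=
  [/\ (forall t (phi : vform b t), exists psi : pvform b' t,
          forall V, tyv [::] V t -> (satv phi V <-> psatv psi V)),
      (forall t (Phi : cform b t), exists Psi : pcform b' t,
          forall M, tyc [::] M t -> (satc Phi M <-> psatc Psi M)),
      (forall t (psi : pvform b' t), exists phi : vform b t,
          forall V, tyv [::] V t -> (satv phi V <-> psatv psi V)) &
      (forall t (Psi : pcform b' t), exists Phi : cform b t,
          forall M, tyc [::] M t -> (satc Phi M <-> psatc Psi M))].

End Language.

(* Main.v *)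
Require Import Defs.
From mathcomp Require Import all_boot.
From Stdlib Require Import ClassicalEpsilon FunctionalExtensionality Classical.

Scheme tyv_mind := Induction for tyv Sort Prop
with tyc_mind := Induction for tyc Sort Prop.

Section Typ.
Variable Sig : Type.
Variable ar : Sig -> arity.

Lemma weaken_both :
  (forall G v t, tyv ar G v t -> forall G', tyv ar (G ++ G') v t) /\
  (forall G m t, tyc ar G m t -> forall G', tyc ar (G ++ G') m t).
Proof.
pose P := fun G (v : Defs.val Sig) t (_ : tyv ar G v t) => forall G', tyv ar (G ++ G') v t.
pose P0 := fun G (m : Defs.comp Sig) t (_ : tyc ar G m t) => forall G', tyc ar (G ++ G') m t.
split; [apply: (@tyv_mind Sig ar P P0) | apply: (@tyc_mind Sig ar P P0)]; rewrite /P /P0;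
  intros; try by econstructor; eauto.
all: have -> : nth T1 G i = nth T1 (G ++ G') i by rewrite nth_cat i0.
all: by apply: tyVar; rewrite size_cat ltn_addr.
Qed.

Lemma weaken0 v t G : tyv ar [::] v t -> tyv ar G v t.
Proof. by move=> H; have := (proj1 weaken_both) _ _ _ H G. Qed.

Lemma nil_both :
  (forall G v t, tyv ar G v t -> forall k, csv [::] k v = v) /\
  (forall G m t, tyc ar G m t -> forall k, csc [::] k m = m).
Proof.
pose P := fun G (v : Defs.val Sig) t (_ : tyv ar G v t) => forall k, csv [::] k v = v.
pose P0 := fun G (m : Defs.comp Sig) t (_ : tyc ar G m t) => forall k, csc [::] k m = m.
split; [apply: (@tyv_mind Sig ar P P0) | apply: (@tyc_mind Sig ar P P0)]; rewrite /P /P0;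
  intros => /=; try congruence.
all: try by case: ifP => // _; rewrite subn0.
all: try (rewrite ?H ?H0; congr COp; apply: (@eq_from_nth _ (dcomp Sig)); rewrite ?size_map // => j Hj;
    by rewrite (nth_map (dcomp Sig)) // ?H ?H1).
all: rewrite H; congr COp; apply: (@eq_from_nth _ (dcomp Sig)); rewrite ?size_map // => j Hj;
    by rewrite (nth_map (dcomp Sig)) // H0.
Qed.

Lemma subst_both :
  (forall G0 v t, tyv ar G0 v t -> forall G' G s, G0 = G' ++ G -> closed_inst ar G s ->
      tyv ar G' (csv s (size G') v) t) /\
  (forall G0 m t, tyc ar G0 m t -> forall G' G s, G0 = G' ++ G -> closed_inst ar G s ->
      tyc ar G' (csc s (size G') m) t).
Proof.
pose P := fun G0 (v : Defs.val Sig) t (_ : tyv ar G0 v t) => forall G' G s, G0 = G' ++ G -> closed_inst ar G s ->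
      tyv ar G' (csv s (size G') v) t.
pose P0 := fun G0 (m : Defs.comp Sig) t (_ : tyc ar G0 m t) => forall G' G s, G0 = G' ++ G -> closed_inst ar G s ->
      tyc ar G' (csc s (size G') m) t.
split; [apply: (@tyv_mind Sig ar P P0) | apply: (@tyc_mind Sig ar P P0)]; rewrite /P /P0;
  intros; subst => /=.
all: try (econstructor; by eauto).
all: try (econstructor; by [eauto | apply: (H (_ :: _)) | apply: (H0 (_ :: _)) | apply: (H1 (_ :: _))]).
all: try (econstructor; [ by rewrite size_map | move=> j; rewrite size_map => Hj;
    rewrite (nth_map (dcomp Sig)) //; by eauto ]).
all: try (econstructor; [ by rewrite size_map | by eauto | move=> j; rewrite size_map => Hj;
    rewrite (nth_map (dcomp Sig)) //; by eauto ]).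
all: case: H0 => Hs Hty.
all: case: ifP => Hi.
all: try (rewrite nth_cat Hi; by apply: tyVar).
all: rewrite size_cat in i0.
all: have Hk : i - size G' < size s by rewrite Hs ltn_subLR // leqNgt Hi.
all: rewrite Hk nth_cat Hi.
all: apply: weaken0; rewrite -Hs in Hty; exact: Hty _ Hk.
Qed.

Lemma subst1 t0 t1 n v : tyc ar [:: t0] n t1 -> tyv ar [::] v t0 -> tyc ar [::] (csc [:: v] 0 n) t1.
Proof.
move=> Hn Hv; apply: ((proj2 subst_both) _ _ _ Hn [::] [:: t0] [:: v]) => //.
by split => // -[].
Qed.

Lemma numeral_ty i : tyv ar [::] (numeral Sig i) TN.
Proof. elim: i => [|i IH] /=; constructor => //. Qed.

Fixpoint tystack (S : seq (Defs.comp Sig)) (t0 t : ty) : Prop :=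
  match S with [::] => t0 = t | n :: S' => exists t1, tyc ar [:: t0] n t1 /\ tystack S' t1 t end.
Definition tycfg (c : config Sig) t := exists t0, tyc ar [::] c.2 t0 /\ tystack c.1 t0 t.

Lemma step_pres c t : tycfg c t ->
  match step c with
  | RStep c' => tycfg c' t
  | RLeaf v => tyv ar [::] v t
  | RNode _ _ kids => forall i c', kids i = Some c' -> tycfg c' t
  | RStuck => True end.
Proof.
case: c => S m [t0 [/= Hm HS]].
case: m Hm => [v w|v|m n|ty v|v m n|o p ms|o p f] Hm /=.
- case: v Hm => // ty b Hm; inversion Hm; subst.
  match goal with H : tyv _ _ (VLam _ _) _ |- _ => inversion H; subst end.
  exists t0; split => //; apply: subst1; eauto.
- inversion Hm; subst.
  case: S HS => [|n S] /= HS; first by subst.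
  case: HS => t1 [Hn HS]; exists t1; split => //; exact: subst1 Hn H1.
- inversion Hm; subst; exists t1; split => //; by exists t0.
- inversion Hm; subst; exists (TArr ty t'); split => //.
  econstructor; first eassumption.
  apply: tyLam; apply: (@tyLet _ ar _ (TArr ty t')).
    by apply: tyFix; exact: weaken0.
  econstructor; [exact: (@tyVar _ ar [:: TArr ty t'; ty] 0 erefl) | exact: (@tyVar _ ar [:: TArr ty t'; ty] 1 erefl)].
- inversion Hm; subst.
  case: v Hm H3 => // [|w] Hm Hv.
    by exists t0.
  inversion Hv; subst; exists t0; split => //; apply: subst1; eassumption.
- inversion Hm; subst.
  + move=> i c'; case: ifP => // Hi [<-]; exists t0; split => //; by eauto.
  + case: (val_nat v) => // k.
    move=> i c'; case: ifP => // Hi [<-]; exists t0; split => //; by eauto.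
- inversion Hm; subst.
  + move=> i c' [<-]; exists t0; split => //=; econstructor; [eassumption | exact: numeral_ty].
  + case: (val_nat v) => // k.
    move=> i c' [<-]; exists t0; split => //=; econstructor; [eassumption | exact: numeral_ty].
Qed.

Lemma run_leaf n : forall c p V t, tycfg c t -> run n c p = LLeaf _ V -> tyv ar [::] V t.
Proof.
elim: n => [|n IH] c p V t Hc //; rewrite [run _ _ _]/=.
have := @step_pres c t Hc; rewrite -/(run _ _ _); case: (step c) => [c'|v|s k kids|] //=.
- move=> Hc'; exact: IH.
- by move=> Hv; case: p => // -[<-].
- move=> Hk; case: p => // i p; case E: (kids i) => [c'|] // ; apply: IH; exact: Hk E.
Qed.

Lemma opsem_leaf M t p V : tyc ar [::] M t -> opsem M p = LLeaf _ V -> tyv ar [::] V t.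
Proof.
move=> HM; rewrite /opsem /tree_of; apply: run_leaf; by exists t.
Qed.
End Typ.

Lemma restrict_ext Sig (P Q : Defs.val Sig -> Prop) (tr : tree Sig (Defs.val Sig)) :
  (forall p V, tr p = LLeaf _ V -> (P V <-> Q V)) -> restrict P tr = restrict Q tr.
Proof.
move=> H; apply: functional_extensionality => p; rewrite /restrict.
case: excluded_middle_informative => [[k [V [Hk [HV HP]]]]|HA];
case: excluded_middle_informative => [[k' [V' [Hk' [HV' HQ]]]]|HB] //.
- exfalso; apply: HB; exists k, V; split => //; split => //; by rewrite -(H _ _ HV).
- exfalso; apply: HA; exists k', V'; split => //; split => //; by rewrite (H _ _ HV').
Qed.


Scheme vf_mind := Induction for vform Sort Prop with cf_mind := Induction for cform Sort Prop.
Scheme pv_mind := Induction for pvform Sort Prop with pc_mind := Induction for pcform Sort Prop.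

Lemma choice_fun (I A : Type) (P : I -> A -> Prop) :
  (forall i, exists a, P i a) -> exists g : I -> A, forall i, P i (g i).
Proof.
move=> H; exists (fun i => proj1_sig (constructive_indefinite_description _ (H i))).
move=> i; exact: proj2_sig (constructive_indefinite_description _ (H i)).
Qed.

Section Logic.
Variable Sig : Type.
Variable ar : Sig -> arity.
Variable O : Type.
Variable osem : O -> tree Sig unit -> Prop.

Notation sv := (@satv Sig ar O osem _ _).
Notation sc := (@satc Sig ar O osem _ _).
Notation psv := (@psatv Sig ar O osem _ _).
Notation psc := (@psatc Sig ar O osem _ _).

Lemma pure_to_V :
  (forall b t (psi : pvform O b t), exists phi : vform Sig ar O b t,
      forall V, sv phi V <-> psv psi V) /\
  (forall b t (Psi : pcform O b t), exists Phi : cform Sig ar O b t,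
      forall M, sc Phi M <-> psc Psi M).
Proof.
pose P := fun b t (psi : pvform O b t) => exists phi : vform Sig ar O b t,
      forall V, sv phi V <-> psv psi V.
pose P0 := fun b t (Psi : pcform O b t) => exists Phi : cform Sig ar O b t,
      forall M, sc Phi M <-> psc Psi M.
split; [apply: (@pv_mind O P P0) | apply: (@pc_mind O P P0)]; rewrite /P /P0.
all: try (move=> b n; by exists (FNum _ _ _ b n)).
all: try (move=> b t t' phi _ Psi [Phi' HPhi];
  pose I := {V : Defs.val Sig | tyv ar [::] V t /\ psv phi V};
  exists (FVAnd _ _ _ b (TArr t t') I (fun i => FPt _ _ _ b t t' (proj1_sig i) (proj1 (proj2_sig i)) Phi'));
  move=> W /=; split;
  [ move=> H V HV Hphi; apply/HPhi; exact: (H (exist _ V (conj HV Hphi)))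
  | move=> H [V [HV Hphi]] /=; apply/HPhi; exact: H ]).
all: try (move=> b t I f IH; have [g Hg] := choice_fun _ _ _ IH;
  exists (FVAnd _ _ _ b t I g) => W /=; split => H i; by apply/Hg).
all: try (move=> b t I f IH; have [g Hg] := choice_fun _ _ _ IH;
  exists (FVOr _ _ _ b t I g) => W /=; split => -[i H]; exists i; by apply/Hg).
all: try (move=> b t I f IH; have [g Hg] := choice_fun _ _ _ IH;
  exists (FCAnd _ _ _ b t I g) => W /=; split => H i; by apply/Hg).
all: try (move=> b t I f IH; have [g Hg] := choice_fun _ _ _ IH;
  exists (FCOr _ _ _ b t I g) => W /=; split => -[i H]; exists i; by apply/Hg).
all: try (move=> t psi [phi H]; first [exists (FVNeg _ _ _ t phi) | exists (FCNeg _ _ _ t phi)];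
  move=> W /=; by rewrite H).
all: move=> b t o psi [phi H]; exists (FMod _ _ _ b t o phi) => M /=.
all: by rewrite (@restrict_ext _ (fun V => sv phi V) (fun V => psv psi V)).
Qed.

Fixpoint tysz (t : ty) : nat := match t with TArr a b => (tysz a + tysz b).+1 | _ => 1 end.

Definition Kp b := forall t1 t' W V U, tyv ar [::] W (TArr t1 t') -> vle ar osem b t1 V U ->
  forall Phi : cform Sig ar O b t', sc Phi (CApp W V) -> sc Phi (CApp W U).

Lemma fpt_case n (IHn : forall b, Kp b ->
  (forall t (phi : vform Sig ar O b t), tysz t <= n -> exists psi : pvform O b t,
      forall V, tyv ar [::] V t -> (sv phi V <-> psv psi V)) /\
  (forall t (Phi : cform Sig ar O b t), tysz t <= n -> exists Psi : pcform O b t,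
      forall M, tyc ar [::] M t -> (sc Phi M <-> psc Psi M)))
  b t1 t' V (HV : tyv ar [::] V t1) (Phi : cform Sig ar O b t')
  (IHPhi : Kp b -> tysz t' <= n.+1 -> exists Psi : pcform O b t',
      forall M, tyc ar [::] M t' -> (sc Phi M <-> psc Psi M)) :
  Kp b -> tysz (TArr t1 t') <= n.+1 -> exists psi : pvform O b (TArr t1 t'),
      forall W, tyv ar [::] W (TArr t1 t') -> (sv (FPt Sig ar O b t1 t' V HV Phi) W <-> psv psi W).
Proof.
move=> Kb Hsz.
have [Phi' HPhi] := IHPhi Kb (leq_trans (leq_addl _ _) (ltnW Hsz)).
have Q1 := (proj1 (IHn b Kb)) t1.
pose I := {U : Defs.val Sig | tyv ar [::] U t1 /\ ~ vle ar osem b t1 V U}.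
have Hsep : forall i : I, exists psi : pvform O b t1, psv psi V /\ ~ psv psi (proj1_sig i).
  move=> [U [HU Hn]] /=.
  have [phi [Hp1 Hp2]] : exists phi : vform Sig ar O b t1, sv phi V /\ ~ sv phi U.
    apply: NNPP => Hne; apply: Hn; split => //; split => // phi Hphi.
    apply: NNPP => Hnu; apply: Hne; by exists phi.
  have [psi Hpsi] := Q1 phi (leq_trans (leq_addr _ _) Hsz).
  exists psi; split; [by apply/(Hpsi V HV) | by rewrite -(Hpsi U HU)].
have [g Hg] := choice_fun _ _ _ Hsep.
exists (PArr O b t1 t' (PVAnd O b t1 I g) Phi') => W HW /=.
have Htyp : forall U, tyv ar [::] U t1 -> tyc ar [::] (CApp W U) t' by move=> U HU; econstructor; eauto.
split.
- move=> HWV U HU Hchi.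
  have Hle : vle ar osem b t1 V U.
    apply: NNPP => Hn; apply: (Hg (exist _ U (conj HU Hn))).2; exact: Hchi.
  apply/(HPhi _ (Htyp U HU)); exact: Kb HW Hle _ HWV.
- move=> H; apply/(HPhi _ (Htyp V HV)); apply: H => // i; exact: (Hg i).1.
Qed.

Lemma V_to_pure n : forall b, Kp b ->
  (forall t (phi : vform Sig ar O b t), tysz t <= n -> exists psi : pvform O b t,
      forall V, tyv ar [::] V t -> (sv phi V <-> psv psi V)) /\
  (forall t (Phi : cform Sig ar O b t), tysz t <= n -> exists Psi : pcform O b t,
      forall M, tyc ar [::] M t -> (sc Phi M <-> psc Psi M)).
Proof.
elim: n => [|n IHn].
  by move=> b _; split => -[].
pose P := fun b t (phi : vform Sig ar O b t) => Kp b -> tysz t <= n.+1 -> exists psi : pvform O b t,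
      forall V, tyv ar [::] V t -> (sv phi V <-> psv psi V).
pose P0 := fun b t (Phi : cform Sig ar O b t) => Kp b -> tysz t <= n.+1 -> exists Psi : pcform O b t,
      forall M, tyc ar [::] M t -> (sc Phi M <-> psc Psi M).
have [H1 H2] : (forall b t phi, P b t phi) /\ (forall b t Phi, P0 b t Phi).
{ split; [apply: (@vf_mind Sig ar O P P0) | apply: (@cf_mind Sig ar O P P0)]; rewrite /P /P0.
  all: try (move=> b n0 _ _; by exists (PNum O b n0)).
  all: try (move=> b t1 t' V HV Phi IHPhi; exact: (fpt_case _ IHn _ _ _ _ HV _ IHPhi)).
  all: try (move=> b t I f IH Kb Hsz; have [g Hg] := choice_fun _ _ _ (fun i => IH i Kb Hsz);
    first [exists (PVAnd O b t I g) | exists (PCAnd O b t I g)] => W HW /=; split => H i; by apply/(Hg i W HW)).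
  all: try (move=> b t I f IH Kb Hsz; have [g Hg] := choice_fun _ _ _ (fun i => IH i Kb Hsz);
    first [exists (PVOr O b t I g) | exists (PCOr O b t I g)] => W HW /=; split => -[i H]; exists i; by apply/(Hg i W HW)).
  all: try (move=> t phi IH Kb Hsz; have [psi H] := IH Kb Hsz;
    first [exists (PVNeg O t psi) | exists (PCNeg O t psi)] => W HW /=; by rewrite (H W HW)).
  all: move=> b t o phi IH Kb Hsz; have [psi H] := IH Kb Hsz; exists (PMod O b t o psi) => M HM /=.
  all: rewrite (@restrict_ext _ (fun V => sv phi V) (fun V => psv psi V)) // => p V Hp.
  all: apply: H; exact: (@opsem_leaf Sig ar M t p V HM Hp). }
move=> b Kb; split => t phi Hsz; [exact: H1 Kb Hsz | exact: H2 Kb Hsz].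
Qed.
End Logic.

Section Fin.
Variable Sig : Type.
Variable ar : Sig -> arity.
Variable O : Type.
Variable osem : O -> tree Sig unit -> Prop.

Lemma csv_nil0 V t : tyv ar [::] V t -> csv [::] 0 V = V.
Proof. move=> H; exact: (proj1 (@nil_both Sig ar)) _ _ _ H 0. Qed.

Lemma openv_nil (R : ty -> Defs.val Sig -> Defs.val Sig -> Prop) t V U :
  tyv ar [::] V t -> tyv ar [::] U t -> R t V U -> openv ar R [::] t V U.
Proof.
move=> HV HU HR; split => //; split => // -[|x s] [Hs _] //.
by rewrite (csv_nil0 _ _ HV) (csv_nil0 _ _ HU).
Qed.

Lemma openc_nil (R : ty -> Defs.comp Sig -> Defs.comp Sig -> Prop) t W V U t1 :
  openc ar R [::] t (CApp W V) (CApp W U) ->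
  tyv ar [::] W (TArr t1 t) -> tyv ar [::] V t1 -> tyv ar [::] U t1 -> R t (CApp W V) (CApp W U).
Proof.
move=> [_ [_ H]] HW HV HU.
have := H [::]; rewrite /= (csv_nil0 _ _ HW) (csv_nil0 _ _ HV) (csv_nil0 _ _ HU); apply.
by split => // -[].
Qed.

Lemma K_true : compatible ar (openv ar (veq ar osem true)) (openc ar (ceq ar osem true)) ->
  @Kp Sig ar O osem true.
Proof.
move=> Hc t1 t' W V U HW Hle Phi HPhi.
case: Hc => _ [_ [_ [_ [_ [Happ _]]]]].
have [HV [HU Himp]] := Hle.
have Hveq : veq ar osem true t1 V U.
  split => //; split => //; split => // phi HphiU; apply: NNPP => Hn.
  exact: (Himp (FVNeg _ _ _ t1 phi) Hn).
have HWW : veq ar osem true (TArr t1 t') W W by split; split => //; split.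
have Hc := Happ [::] t1 t' W W V U (openv_nil _ _ _ _ HW HW HWW) (openv_nil _ _ _ _ HV HU Hveq).
have [[_ [_ Hcle]] _] := openc_nil _ _ _ _ _ _ Hc HW HV HU.
exact: Hcle Phi HPhi.
Qed.

Lemma K_false : compatible ar (openv ar (vle ar osem false)) (openc ar (cle ar osem false)) ->
  @Kp Sig ar O osem false.
Proof.
move=> Hc t1 t' W V U HW Hle Phi HPhi.
case: Hc => _ [_ [_ [_ [_ [Happ _]]]]].
have [HV [HU Himp]] := Hle.
have HWW : vle ar osem false (TArr t1 t') W W by split => //; split.
have Hc := Happ [::] t1 t' W W V U (openv_nil _ _ _ _ HW HW HWW) (openv_nil _ _ _ _ HV HU Hle).
have [_ [_ Hcle]] := openc_nil _ _ _ _ _ _ Hc HW HV HU.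
exact: Hcle Phi HPhi.
Qed.

Lemma equi_of b : @Kp Sig ar O osem b -> equi_expressive ar osem b b.
Proof.
move=> Kb; split.
- move=> t phi; have HH := (proj1 (@V_to_pure Sig ar O osem (tysz t) b Kb)) t phi (leqnn (tysz t)). exact HH.
- move=> t phi; exact: (proj2 (@V_to_pure Sig ar O osem (tysz t) b Kb)) t phi (leqnn _).
- move=> t psi; have [phi H] := (proj1 (@pure_to_V Sig ar O osem)) _ t psi; exists phi => V _; exact: H.
- move=> t psi; have [phi H] := (proj2 (@pure_to_V Sig ar O osem)) _ t psi; exists phi => V _; exact: H.
Qed.
End Fin.

Theorem proposition8p3 (Sig : Type) (ar : Sig -> arity)
    (O : Type) (osem : O -> tree Sig unit -> Prop) :
  (compatible ar (openv ar (veq ar osem true)) (openc ar (ceq ar osem true)) ->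
     equi_expressive ar osem true true) /\
  (compatible ar (openv ar (vle ar osem false)) (openc ar (cle ar osem false)) ->
     equi_expressive ar osem false false).
Proof.
split => Hc; apply: equi_of; [exact: K_true | exact: K_false].
Qed.
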